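(* Let $S$ be a finite inverse semigroup and let $\langle\cdot,\cdot\rangle$ be the sesquilinear form on $\mathbb{C}S$ determined by $$\langle\lfloor s\rfloor,\lfloor t\rfloor\rangle=\begin{cases}1 & \text{if } s=t,\\ 0 & \text{otherwise,}\end{cases}\qquad s,t\in S.$$ Then the isotypic subspaces of $\mathbb{C}S$ are mutually orthogonal with respect to $\langle\cdot,\cdot\rangle$.
   Context: **Inverse semigroups.** $S$ is a finite inverse semigroup: every $x\in S$ has a unique $x^{-1}$ with $xx^{-1}x=x$ and $x^{-1}xx^{-1}=x^{-1}$. **Groupoid basis.** The natural partial order is $t\le s$ iff $t=es$ for some idempotent $e\in S$, with Möbius function $\mu$. The groupoid basis of $\mathbb{C}S$ is $\{\lfloor s\rfloor\}_{s\in S}$, where $\lfloor s\rfloor=\sum_{t\le s}\mu(t,s)t$. **Isotypic subspaces.** $\mathbb{C}S$ is semisimple. Its isotypic subspaces are the isotypic components of $\mathbb{C}S$ as a left module over itself: for each irreducible representation, the sum of all simple left ideals isomorphic to it. Equivalently, they are the minimal two-sided ideals of $\mathbb{C}S$. *)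

(* Defs.v *)
From mathcomp Require Import all_boot all_order all_algebra.
From mathcomp Require Import algC.
Set Implicit Arguments. Unset Strict Implicit. Unset Printing Implicit Defensive.
Import Order.TTheory GRing.Theory Num.Theory.
Local Open Scope ring_scope.

Section InvSemigroup.
Variables (S : finType) (mul : S -> S -> S).


Definition is_inverse_semigroup : Prop :=
  associative mul /\
  forall x, exists! y, mul (mul x y) x = x /\ mul (mul y x) y = y.

Definition idempotent_el (e : S) : bool := mul e e == e.

Definition nat_le (t s : S) : bool :=
  [exists e, idempotent_el e && (t == mul e s)].

Definition nat_lt (t s : S) : bool := (t != s) && nat_le t s.

(* Recursion is on a fuel argument; fuel #|S| exceeds every chain length. *)
Fixpoint mobius_fuel (n : nat) (t s : S) : algC :=
  match n with
  | 0 => (t == s)%:R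
  | n'.+1 =>
      if t == s then 1
      else if nat_le t s then
        - \sum_(u | nat_le t u && nat_lt u s) mobius_fuel n' t u
      else 0
  end.

Definition mobius (t s : S) : algC := mobius_fuel #|S| t s.

(* The semigroup algebra CS: functions S -> C, point masses = elements of S. *)
Local Notation CS := {ffun S -> algC}.

Definition delta (s : S) : CS := [ffun u => (u == s)%:R].

Definition cs_mul (a b : CS) : CS :=
  [ffun u => \sum_(p : S * S | mul p.1 p.2 == u) a p.1 * b p.2].

(* groupoid basis element floor(s) = sum_{t <= s} mu(t,s) t *)
Definition gbasis (s : S) : CS :=
  [ffun u => if nat_le u s then mobius u s else 0].

Definition cs_scale (c : algC) (x : CS) : CS := [ffun u => c * x u].

Definition two_sided_ideal (I : CS -> Prop) : Prop :=
  [/\ I 0,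
      (forall x y, I x -> I y -> I (x + y)),
      (forall (c : algC) x, I x -> I (cs_scale c x)),
      (forall a x, I x -> I (cs_mul a x)) &
      (forall a x, I x -> I (cs_mul x a))].

Definition minimal_two_sided_ideal (I : CS -> Prop) : Prop :=
  [/\ two_sided_ideal I,
      (exists x, I x /\ x != 0) &
      (forall J, two_sided_ideal J -> (forall x, J x -> I x) ->
         (forall x, J x -> x = 0) \/ (forall x, I x -> J x))].

Definition sesquilinear (B : CS -> CS -> algC) : Prop :=
  (forall (c : algC) x y z, B (cs_scale c x + y) z = c * B x z + B y z) /\
  (forall (c : algC) x y z, B x (cs_scale c y + z) = c^* * B x y + B x z).

End InvSemigroup.

(* Main.v *)
Require Import Defs.
From mathcomp Require Import all_boot all_order all_algebra.
From mathcomp Require Import algC.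
Set Implicit Arguments. Unset Strict Implicit. Unset Printing Implicit Defensive.
Import Order.TTheory GRing.Theory Num.Theory.
Local Open Scope ring_scope.

Section Basic.
Variables (S : finType) (mul : S -> S -> S).
Hypothesis HS : is_inverse_semigroup mul.
Local Infix "·" := mul (at level 40, left associativity).

Let mA : associative mul := HS.1.
Ltac ac := solve [rewrite ?mA; reflexivity].
Ltac via T := transitivity T; [ac|].
Ltac viar T := symmetry; transitivity T; [ac|]; symmetry.

Definition inv (x : S) : S :=
  odflt x [pick y | (x · y · x == x) && (y · x · y == y)].

Lemma invP x : x · inv x · x = x /\ inv x · x · inv x = inv x.
Proof.
rewrite /inv; case: pickP => [y /andP[/eqP -> /eqP ->] //|H].
case: (HS.2 x) => y [[h1 h2] _].
by have := H y; rewrite h1 h2 !eqxx.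
Qed.

Lemma inv_uniq x y : x · y · x = x -> y · x · y = y -> y = inv x.
Proof.
move=> h1 h2; case: (HS.2 x) => z [_ hz].
by rewrite -(hz y (conj h1 h2)) -(hz (inv x) (invP x)).
Qed.

Lemma invL x : x · inv x · x = x. Proof. exact: (invP x).1. Qed.
Lemma invR x : inv x · x · inv x = inv x. Proof. exact: (invP x).2. Qed.

Lemma inv_inv x : inv (inv x) = x.
Proof. by symmetry; apply: inv_uniq; [apply: invR | apply: invL]. Qed.

Lemma inv_idem e : e · e = e -> inv e = e.
Proof. by move=> he; symmetry; apply: inv_uniq; rewrite !he. Qed.

Lemma idem_mul_aux e f : e · e = e -> f · f = f -> (e · f) · (e · f) = e · f.
Proof.
move=> he hf; set a := e · f; set a' := inv a.
have hb : f · a' · e = a'.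
  apply: inv_uniq.
  - via (e · (f · f) · a' · (e · e) · f). rewrite he hf.
    via (a · a' · a). by rewrite invL.
  - via (f · a' · (e · e) · (f · f) · a' · e). rewrite he hf.
    via (f · (a' · a · a') · e). by rewrite invR.
have ha' : a' · a' = a'.
  rewrite -{1}hb -{2}hb. via (f · (a' · a · a') · e). by rewrite invR.
have : a' = a.
  by rewrite -(inv_idem ha') /a' inv_inv.
move=> E; rewrite -E; exact: ha'.
Qed.

Lemma idem_comm e f : e · e = e -> f · f = f -> e · f = f · e.
Proof.
move=> he hf.
have h1 := idem_mul_aux he hf; have h2 := idem_mul_aux hf he.
rewrite -(inv_idem h1); symmetry; apply: inv_uniq.
- via (e · (f · f) · (e · e) · f). rewrite he hf. via ((e · f) · (e · f)). exact: h1.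
- via (f · (e · e) · (f · f) · e). rewrite he hf. via ((f · e) · (f · e)). exact: h2.
Qed.


Definition idem (e : S) := e · e = e.

Lemma idemP e : reflect (idem e) (idempotent_el mul e).
Proof. exact: eqP. Qed.

Lemma idem_xx' x : idem (x · inv x).
Proof. rewrite /idem; via (x · inv x · x · inv x). by rewrite invL. Qed.
Lemma idem_x'x x : idem (inv x · x).
Proof. rewrite /idem; via (inv x · x · inv x · x). by rewrite invR. Qed.

Lemma idem_mul e f : idem e -> idem f -> idem (e · f).
Proof. exact: idem_mul_aux. Qed.

Lemma inv_mul x y : inv (x · y) = inv y · inv x.
Proof.
symmetry; apply: inv_uniq.
- via (x · ((y · inv y) · (inv x · x)) · y).
  rewrite (idem_comm (idem_xx' y) (idem_x'x x)).
  via ((x · inv x · x) · (y · inv y · y)). by rewrite !invL.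
- via (inv y · ((inv x · x) · (y · inv y)) · inv x).
  rewrite (idem_comm (idem_x'x x) (idem_xx' y)).
  via ((inv y · y · inv y) · (inv x · x · inv x)). by rewrite !invR.
Qed.

Lemma le_idemL t s : nat_le mul t s -> exists2 e, idem e & t = e · s.
Proof. by case/existsP=> e /andP[/idemP he /eqP ->]; exists e. Qed.

Lemma le_ofL e t s : idem e -> t = e · s -> nat_le mul t s.
Proof. by move=> he ->; apply/existsP; exists e; rewrite eqxx andbT; apply/idemP. Qed.

Lemma le_left t s : nat_le mul t s -> t = t · inv t · s.
Proof.
case/le_idemL=> e he ->; rewrite inv_mul (inv_idem he); symmetry.
via (e · (s · inv s) · e · s). rewrite (idem_comm he (idem_xx' s)).
via (s · inv s · (e · e) · s). rewrite he.
via (s · inv s · e · s). rewrite -(idem_comm he (idem_xx' s)).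
via (e · (s · inv s · s)). by rewrite invL.
Qed.

Lemma le_right t s : nat_le mul t s -> t = s · (inv t · t).
Proof.
case/le_idemL=> e he ->; rewrite inv_mul (inv_idem he); symmetry.
via (s · inv s · (e · e) · s). rewrite he.
rewrite -(idem_comm he (idem_xx' s)).
via (e · (s · inv s · s)). by rewrite invL.
Qed.

Lemma le_ofR f t s : idem f -> t = s · f -> nat_le mul t s.
Proof.
move=> hf ->; apply: (@le_ofL (s · f · inv s)).
  rewrite /idem; via (s · (f · (inv s · s)) · f · inv s).
  rewrite (idem_comm hf (idem_x'x s)).
  via ((s · inv s · s) · (f · f) · inv s). by rewrite invL hf.
symmetry; via (s · (f · (inv s · s))). rewrite (idem_comm hf (idem_x'x s)).
via (s · inv s · s · f). by rewrite invL.
Qed.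

Lemma le_refl s : nat_le mul s s.
Proof. apply: (@le_ofL (s · inv s)); [exact: idem_xx' | by rewrite invL]. Qed.

Lemma le_trans t s r : nat_le mul t s -> nat_le mul s r -> nat_le mul t r.
Proof.
case/le_idemL=> e he -> /le_idemL[f hf ->].
apply: (@le_ofL (e · f)); [exact: idem_mul | ac].
Qed.

Lemma le_anti t s : nat_le mul t s -> nat_le mul s t -> t = s.
Proof.
case/le_idemL=> e he Et /le_idemL[f hf Es].
have Es' : s = e · f · s.
  by rewrite (idem_comm he hf) -mA -Et.
rewrite Et; transitivity (e · (e · f · s)); first by rewrite -Es'.
via (e · e · f · s). by rewrite he -Es'.
Qed.


Lemma le_u_idem u a : nat_le mul u a -> inv a · a · (inv u · u) = inv u · u.
Proof.
case/le_idemL=> e he ->; rewrite inv_mul (inv_idem he).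
via (inv a · a · inv a · (e · e) · a). rewrite invR; ac.
Qed.

Lemma card_lower a b :
  #|[set u | nat_le mul u a && nat_le mul u b]| =
  #|[set e | idempotent_el mul e && nat_le mul e (inv a · b)]|.
Proof.
set U := [set u | _]; set E := [set e | _].
have -> : E = [set inv u · u | u in U].
  apply/setP=> e; rewrite inE; apply/idP/imsetP.
  - case/andP=> /idemP he hle.
    have e1 : e = inv a · b · e.
      by rewrite {1}(le_right hle) (inv_idem he) he.
    exists (a · e).
      rewrite inE; apply/andP; split; first exact: (le_ofR he).
      apply: (@le_trans _ (b · e)); last exact: (le_ofR he).
      apply: (le_ofL (idem_xx' a)).
      by rewrite {1}e1; ac.
    rewrite inv_mul (inv_idem he).
    symmetry; via (e · (inv a · a) · e).
    rewrite (idem_comm he (idem_x'x a)).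
    via (inv a · a · (e · e)). rewrite he {1}e1.
    via (inv a · a · inv a · b · e). by rewrite invR -e1.
  - case=> u; rewrite inE => /andP[ha hb] ->.
    apply/andP; split; first exact/idemP/idem_x'x.
    apply: (le_ofR (idem_x'x u)).
    symmetry; via (inv a · (b · (inv u · u))). rewrite -(le_right hb).
    rewrite {1}(le_right ha).
    via (inv a · a · (inv u · u)). exact: le_u_idem.
symmetry; apply: card_in_imset => u1 u2; rewrite !inE => /andP[h1 _] /andP[h2 _] E12.
by rewrite (le_right h1) (le_right h2) E12.
Qed.

End Basic.
Section Mob.
Variables (S : finType) (mul : S -> S -> S).
Hypothesis le_refl : forall s, nat_le mul s s.
Hypothesis le_trans : forall t s r, nat_le mul t s -> nat_le mul s r -> nat_le mul t r.
Hypothesis le_anti : forall t s, nat_le mul t s -> nat_le mul s t -> t = s.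

Local Notation le := (nat_le mul).
Local Notation lt := (nat_lt mul).

Definition kk (u s : S) : nat := #|[set t | le u t && lt t s]|.

Lemma kk_lt u t s : le u t -> lt t s -> (kk u t < kk u s)%N.
Proof.
move=> hut /andP[nts hts]; apply: proper_card; apply/properP; split.
  apply/subsetP=> v; rewrite !inE => /andP[-> /andP[nvt hvt]] /=.
  rewrite /lt /nat_lt (le_trans hvt hts) andbT.
  apply: contraNneq nts => evs; apply/eqP/le_anti => //.
  by rewrite -evs.
exists t; first by rewrite inE hut /lt /nat_lt nts hts.
by rewrite inE /lt /nat_lt eqxx andbF.
Qed.

Lemma mob_fuel n m u s : (kk u s < n)%N -> (kk u s < m)%N ->
  mobius_fuel mul n u s = mobius_fuel mul m u s.
Proof.
elim: n m u s => [|n IH] [|m] u s //= hn hm.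
case: (u == s) => //; case: (nat_le mul u s) => //; congr (- _).
apply: eq_bigr => t /andP[hut hts].
have := kk_lt hut hts => h.
by apply: IH; apply: leq_trans h _.
Qed.

Lemma kk_card u s : (kk u s < #|S|)%N.
Proof.
have hS : (0 < #|S|)%N by apply/card_gt0P; exists s.
rewrite -(prednK hS) ltnS -(cardsC1 s); apply: subset_leq_card.
apply/subsetP=> v; rewrite !inE => /andP[_ /andP[]] //.
Qed.

Lemma mob_rec u s : u != s -> le u s ->
  mobius mul u s = - \sum_(t | le u t && lt t s) mobius mul u t.
Proof.
move=> nus hus.
have hS : (0 < #|S|)%N by apply/card_gt0P; exists s.
have E : mobius mul u s = mobius_fuel mul (#|S|.-1).+1 u s by rewrite prednK.
rewrite E /= (negbTE nus) hus; congr (- _); apply: eq_bigr => t /andP[hut hts].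
rewrite /mobius; apply: mob_fuel; last exact: kk_card.
have := kk_card u s; rewrite -{1}(prednK hS) ltnS; apply: leq_trans.
exact: kk_lt.
Qed.

Lemma mob_diag u : mobius mul u u = 1.
Proof. by rewrite /mobius; case: #|S| => [|n] /=; rewrite eqxx. Qed.

Lemma mob_sum u s :
  \sum_(t | le u t && le t s) mobius mul u t = (u == s)%:R.
Proof.
have [<-|nus] := eqVneq u s.
  rewrite (big_pred1 u) ?mob_diag // => t /=.
  apply/andP/eqP => [[h1 h2]|->]; [exact: le_anti | by rewrite le_refl].
case hus: (le u s); last first.
  rewrite big1 // => t /andP[h1 h2]; by rewrite (le_trans h1 h2) in hus.
rewrite (bigD1 s) /=; last by rewrite hus le_refl.
rewrite mob_rec // addrC.
have -> : \sum_(i | (le u i && le i s) && (i != s)) mobius mul u i =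
          \sum_(t | le u t && lt t s) mobius mul u t.
  apply: eq_bigl => t; rewrite /lt /nat_lt; by case: (le u t); rewrite //= andbC.
by rewrite subrr.
Qed.

End Mob.

Section Alg.
Variables (S : finType) (mul : S -> S -> S).
Hypothesis HS : is_inverse_semigroup mul.
Variable B : {ffun S -> algC} -> {ffun S -> algC} -> algC.
Hypothesis HB : sesquilinear B.
Hypothesis Hbasis : forall s t : S, B (gbasis mul s) (gbasis mul t) = (s == t)%:R.
Local Notation CS := {ffun S -> algC}.
Local Notation le := (nat_le mul).
Local Infix "·" := mul (at level 40, left associativity).

Definition zeta (x : CS) (t : S) : algC := \sum_(s | le t s) x s.

Lemma expand (x : CS) : x = \sum_t cs_scale (zeta x t) (gbasis mul t).
Proof.
apply/ffunP => u; rewrite sum_ffunE.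
transitivity (\sum_s x s * (u == s)%:R).
  rewrite (bigD1 u) //= eqxx mulr1 big1 ?addr0 // => s.
  by rewrite eq_sym => /negbTE ->; rewrite mulr0.
under eq_bigr => s _ do rewrite -(mob_sum (le_refl HS) (@le_trans _ _ HS) (@le_anti _ _ HS)) mulr_sumr big_mkcond.
rewrite exchange_big; apply: eq_bigr => t _.
rewrite !ffunE /zeta mulr_suml [RHS]big_mkcond; apply: eq_bigr => s _.
by case: (le u t); case: (le t s); rewrite /= ?mulr0 ?mul0r.
Qed.

Lemma cs_scale1 (x : CS) : cs_scale 1 x = x.
Proof. by apply/ffunP => u; rewrite ffunE mul1r. Qed.
Lemma cs_scale_0 c : cs_scale c (0 : CS) = 0.
Proof. by apply/ffunP => u; rewrite !ffunE mulr0. Qed.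

Lemma Bl0 z : B 0 z = 0.
Proof.
have := HB.1 1 0 0 z; rewrite cs_scale_0 addr0 mul1r => h.
by apply: (@addrI _ (B 0 z)); rewrite -h addr0.
Qed.
Lemma BlD x y z : B (x + y) z = B x z + B y z.
Proof. by have := HB.1 1 x y z; rewrite cs_scale1 mul1r. Qed.
Lemma BlZ c x z : B (cs_scale c x) z = c * B x z.
Proof. by have := HB.1 c x 0 z; rewrite addr0 Bl0 addr0. Qed.
Lemma Br0 z : B z 0 = 0.
Proof.
have := HB.2 1 z 0 0; rewrite cs_scale_0 addr0 rmorph1 mul1r => h.
by apply: (@addrI _ (B z 0)); rewrite -h addr0.
Qed.
Lemma BrD x y z : B z (x + y) = B z x + B z y.
Proof. by have := HB.2 1 z x y; rewrite cs_scale1 rmorph1 mul1r. Qed.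
Lemma BrZ c x z : B z (cs_scale c x) = c^* * B z x.
Proof. by have := HB.2 c z x 0; rewrite addr0 Br0 addr0. Qed.

Lemma Bform x y : B x y = \sum_t zeta x t * (zeta y t)^*.
Proof.
rewrite [in LHS](expand x) [in LHS](expand y).
rewrite (big_morph (fun v => B v _) (fun a b => BlD a b _) (Bl0 _)).
apply: eq_bigr => t _; rewrite BlZ; congr (_ * _).
rewrite (big_morph (B _) (fun a b => BrD a b _) (Br0 _)).
rewrite (bigD1 t) //= BrZ Hbasis eqxx mulr1 big1 ?addr0 // => t' nt.
by rewrite BrZ Hbasis eq_sym (negbTE nt) mulr0.
Qed.

Lemma Bpos x : B x x = 0 -> x = 0.
Proof.
rewrite Bform => h.
have hz : forall t, zeta x t = 0.
  move=> t; have := @psumr_eq0P _ _ xpredT (fun i => zeta x i * (zeta x i)^*)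
     (fun i _ => mul_conjC_ge0 _) h t isT.
  by move/eqP; rewrite mul_conjC_eq0 => /eqP.
rewrite (expand x); apply: big1 => t _; rewrite hz.
by apply/ffunP => u; rewrite !ffunE mul0r.
Qed.


Local Notation inv := (inv mul).

Definition star (x : CS) : CS := [ffun s => (x (inv s))^*].

Lemma starK x : star (star x) = x.
Proof. by apply/ffunP => s; rewrite !ffunE inv_inv // conjCK. Qed.

Lemma star0 : star 0 = 0.
Proof. by apply/ffunP => s; rewrite !ffunE rmorph0. Qed.
Lemma starD x y : star (x + y) = star x + star y.
Proof. by apply/ffunP => s; rewrite !ffunE rmorphD. Qed.
Lemma starZ c x : star (cs_scale c x) = cs_scale c^* (star x).
Proof. by apply/ffunP => s; rewrite !ffunE rmorphM. Qed.

Lemma star_mul a b : star (cs_mul mul a b) = cs_mul mul (star b) (star a).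
Proof.
apply/ffunP => s; rewrite !ffunE rmorph_sum.
have hinj : injective (fun q : S * S => (inv q.2, inv q.1)).
  by move=> [q1 q2] [r1 r2] [] /(congr1 inv); rewrite !inv_inv // => -> /(congr1 inv); rewrite !inv_inv // => ->.
rewrite [RHS](reindex_inj hinj) /=; apply: eq_big => [[p1 p2]|[p1 p2] _] /=.
  rewrite -(inv_mul HS).
  apply/eqP/eqP => [->|<-]; by rewrite inv_inv.
by rewrite !ffunE !inv_inv // rmorphM mulrC.
Qed.

Definition tau (c : CS) : algC :=
  \sum_s c s * (#|[set e | idempotent_el mul e && le e s]|)%:R.

Lemma tau0 : tau 0 = 0.
Proof. by apply: big1 => s _; rewrite ffunE mul0r. Qed.

Definition cnt (a b : S) : nat := #|[set u | le u a && le u b]|.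

Lemma Bkey x y : B y x = tau (cs_mul mul (star x) y).
Proof.
transitivity (\sum_a \sum_b (x a)^* * y b * (cnt a b)%:R).
  rewrite Bform.
  transitivity (\sum_u \sum_a \sum_b
      (if le u a && le u b then (x a)^* * y b else 0)).
    apply: eq_bigr => u _; rewrite /zeta rmorph_sum mulrC mulr_suml big_mkcond.
    apply: eq_bigr => a _; rewrite mulr_sumr big_mkcond.
    case: (le u a) => /=; last by rewrite big1 // => b _; case: ifP.
    by apply: eq_bigr => b _; case: ifP.
  rewrite exchange_big; apply: eq_bigr => a _.
  rewrite exchange_big; apply: eq_bigr => b _.
  rewrite -big_mkcond /= mulr_natr /cnt -sumr_const.
  by apply: eq_bigl => u; rewrite inE.
rewrite /tau.
transitivity (\sum_(p : S * S) (x (inv p.1))^* * y p.2 *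
    (#|[set e | idempotent_el mul e && le e (p.1 · p.2)]|)%:R).
  rewrite pair_bigA.
  have hinj : injective (fun q : S * S => (inv q.1, q.2)).
    by move=> [q1 q2] [r1 r2] [] /(congr1 inv); rewrite !inv_inv // => -> ->.
  rewrite [RHS](reindex_inj hinj) /=; apply: eq_bigr => [[a b]] _ /=.
  by rewrite inv_inv // /cnt (card_lower HS).
symmetry; under eq_bigr => s _ do rewrite /cs_mul ffunE mulr_suml.
under eq_bigr => s _ do rewrite big_mkcond.
rewrite exchange_big; apply: eq_bigr => p _ /=.
rewrite -big_mkcond (big_pred1 (p.1 · p.2)) ?ffunE //.
Qed.

Lemma ideal_inter (I J : CS -> Prop) :
  two_sided_ideal mul I -> two_sided_ideal mul J ->
  two_sided_ideal mul (fun z => I z /\ J z).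
Proof.
case=> I0 ID IZ IL IR [J0 JD JZ JL JR]; split => //.
- by move=> x y [? ?] [? ?]; split; auto.
- by move=> c x [? ?]; split; auto.
- by move=> a x [? ?]; split; auto.
- by move=> a x [? ?]; split; auto.
Qed.

Lemma ideal_star (I : CS -> Prop) :
  two_sided_ideal mul I -> two_sided_ideal mul (fun z => I z /\ I (star z)).
Proof.
case=> I0 ID IZ IL IR; split => /=.
- by rewrite star0.
- by move=> x y [? ?] [? ?]; rewrite starD; split; auto.
- by move=> c x [? ?]; rewrite starZ; split; auto.
- by move=> a x [? ?]; rewrite star_mul; split; auto.
- by move=> a x [? ?]; rewrite star_mul; split; auto.
Qed.

Lemma inter_zero (I J : CS -> Prop) :
  minimal_two_sided_ideal mul I -> minimal_two_sided_ideal mul J ->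
  ~ (forall x, I x <-> J x) -> forall z, I z -> J z -> z = 0.
Proof.
move=> [hI [x0 [Ix0 nx0]] mI] [hJ _ mJ] nIJ.
case: (mI _ (ideal_inter hI hJ) (fun z hz => hz.1)) => [h|h].
  by move=> z Iz Jz; apply: h.
have IJ : forall x, I x -> J x by move=> x /h [].
case: (mJ _ hI IJ) => [h0|h1].
  by move: nx0; rewrite (h0 _ Ix0) eqxx.
by case: nIJ => x; split; [apply: IJ | apply: h1].
Qed.

Lemma star_closed (I : CS -> Prop) :
  minimal_two_sided_ideal mul I -> forall x, I x -> I (star x).
Proof.
move=> [hI [x0 [Ix0 nx0]] mI].
case: (mI _ (ideal_star hI) (fun z hz => hz.1)) => [h0|h1]; last by move=> x /h1 [].
exfalso; move: nx0; apply/negP; rewrite negbK; apply/eqP.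
apply: Bpos; rewrite Bkey.
case: hI => _ _ _ IL IR.
have -> : cs_mul mul (star x0) x0 = 0.
  apply: h0; split; first by apply: IL.
  by rewrite star_mul starK; apply: IL.
exact: tau0.
Qed.

Lemma orth (I J : CS -> Prop) :
  minimal_two_sided_ideal mul I -> minimal_two_sided_ideal mul J ->
  ~ (forall x, I x <-> J x) -> forall x y, I x -> J y -> B x y = 0.
Proof.
move=> HI HJ nIJ x y Ix Jy.
rewrite Bkey.
have Jy' := star_closed HJ Jy.
case: (HI) => [[_ _ _ IL _] _ _]; case: (HJ) => [[_ _ _ _ JR] _ _].
rewrite (inter_zero HI HJ nIJ (IL _ _ Ix) (JR _ _ Jy')).
exact: tau0.
Qed.

End Alg.

Theorem theoremC3 (S : finType) (mul : S -> S -> S)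
  (HS : is_inverse_semigroup mul)
  (B : {ffun S -> algC} -> {ffun S -> algC} -> algC)
  (HB : sesquilinear B)
  (Hbasis : forall s t : S,
      B (gbasis mul s) (gbasis mul t) = (s == t)%:R)
  (I J : {ffun S -> algC} -> Prop)
  (HI : minimal_two_sided_ideal mul I)
  (HJ : minimal_two_sided_ideal mul J)
  (HIJ : ~ (forall x, I x <-> J x)) :
  forall x y, I x -> J y -> B x y = 0.
Proof. exact: (orth HS HB Hbasis HI HJ HIJ). Qed.
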